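(* Let $\lambda$ be a nonzero real number and $n$ a positive integer. Then $$\frac{\lambda^{n-1}}{n}(1)_{n,\frac{1}{\lambda}}=\sum_{k=1}^{n}\beta_{k-1,\lambda}(1-\lambda)\,S_{1,\lambda}(n,k).$$
   Context: For real $y$, $\mu\neq 0$ and integer $k\ge0$: $(y)_{0,\mu}=1$, $(y)_{k,\mu}=y(y-\mu)\cdots(y-(k-1)\mu)$ (used with $\mu=\lambda$ and $\mu=1/\lambda$); $(y)_0=1$, $(y)_k=y(y-1)\cdots(y-k+1)$. The degenerate exponential is $e_\lambda^x(t)=\sum_{k\ge0}(x)_{k,\lambda}t^k/k!=(1+\lambda t)^{x/\lambda}$, $e_\lambda(t)=e^1_\lambda(t)$. The degenerate Bernoulli polynomials are defined by $\frac{t}{e_\lambda(t)-1}e_\lambda^x(t)=\sum_{n\ge0}\beta_{n,\lambda}(x)\frac{t^n}{n!}$. The degenerate Stirling numbers of the first kind are defined by $(x)_{n}=\sum_{k=0}^{n}S_{1,\lambda}(n,k)(x)_{k,\lambda}$ ($n\ge0$). *)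

(* Defs.v *)
From mathcomp Require Import all_boot all_order all_algebra.
From mathcomp Require Import reals.
Set Implicit Arguments. Unset Strict Implicit. Unset Printing Implicit Defensive.
Import Order.TTheory GRing.Theory Num.Theory.
Local Open Scope ring_scope.

Definition dfall {R : realType} (y mu : R) (k : nat) : R :=
  \prod_(i < k) (y - i%:R * mu).

Definition ffall {R : realType} (y : R) (k : nat) : R := dfall y 1 k.

(* beta is the family of degenerate Bernoulli polynomials beta_{n,lam}(x):
   coefficientwise form of the formal power series identity
     ((e_lam(t) - 1)/t) * sum_n beta_n(x) t^n/n! = e_lam^x(t),
   where (e_lam(t)-1)/t = sum_m (1)_{m+1,lam} t^m/(m+1)!.
   This is equivalent to t/(e_lam(t)-1) e_lam^x(t) = sum_n beta_n(x) t^n/n!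
   since (e_lam(t)-1)/t has constant term 1. *)
Definition is_degBernoulli {R : realType} (lam : R) (beta : nat -> R -> R) : Prop :=
  forall (n : nat) (x : R),
    \sum_(k < n.+1) (beta k x / (k`!)%:R) * (dfall 1 lam (n - k).+1 / ((n - k).+1`!)%:R)
    = dfall x lam n / (n`!)%:R.

Definition is_degStirling1 {R : realType} (lam : R) (S : nat -> nat -> R) : Prop :=
  forall (n : nat) (x : R),
    ffall x n = \sum_(k < n.+1) S n k * dfall x lam k.

(* Main.v *)
Require Import Defs.
From mathcomp Require Import all_boot all_order all_algebra.
From mathcomp Require Import reals.
From mathcomp Require Import ring.
Import Order.TTheory GRing.Theory Num.Theory.
Local Open Scope ring_scope.

Lemma dfall0 (R : realType) (x mu : R) : dfall x mu 0 = 1.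
Proof. by rewrite /dfall big_ord0. Qed.

Lemma dfallS (R : realType) (x mu : R) k : dfall x mu k.+1 = dfall x mu k * (x - k%:R * mu).
Proof. by rewrite /dfall big_ord_recr. Qed.

Lemma dfall_root (R : realType) (mu : R) i k : (i < k)%N -> dfall (i%:R * mu) mu k = 0.
Proof. by move=> ik; rewrite /dfall (bigD1 (Ordinal ik)) //= subrr mul0r.
Qed.

Lemma fact_neq0 (R : realType) k : (k`!)%:R != 0 :> R.
Proof. by rewrite pnatr_eq0 -lt0n fact_gt0. Qed.

Definition Ff {R : realType} (lam x : R) k := dfall x lam k / (k`!)%:R.

Lemma FfS (R : realType) (lam x : R) k : (k.+1)%:R * Ff lam x k.+1 = Ff lam x k * (x - k%:R * lam).
Proof.
rewrite /Ff dfallS factS natrM.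
have h1 := fact_neq0 R k. have h2 : (k.+1)%:R != 0 :> R by rewrite pnatr_eq0.
field. by rewrite h1 addrC natr1 h2.
Qed.

Lemma Ff0 (R : realType) (lam x : R) : Ff lam x 0 = 1.
Proof. by rewrite /Ff dfall0 /= divr1. Qed.

Lemma vandF (R : realType) (lam x y : R) n :
  Ff lam (x + y) n = \sum_(k < n.+1) Ff lam x k * Ff lam y (n - k)%N.
Proof.
elim: n => [|n IH].
  by rewrite big_ord1 !Ff0 mulr1.
apply: (mulfI (_ : (n.+1)%:R != 0 :> R)); first by rewrite pnatr_eq0.
rewrite FfS IH mulr_suml.
have E1 : forall k : 'I_n.+1, Ff lam x k * Ff lam y (n - k)%N * (x + y - n%:R * lam) =
   (k.+1)%:R * Ff lam x k.+1 * Ff lam y (n - k)%N + Ff lam x k * ((n - k)%N.+1%:R * Ff lam y (n-k)%N.+1).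
  move=> k; rewrite FfS FfS.
  have hk : (k <= n)%N by rewrite -ltnS.
  have -> : n%:R = (n-k)%N%:R + k%:R :> R by rewrite -natrD subnK.
  ring.
rewrite (eq_bigr _ (fun k _ => E1 k)) big_split /= mulr_sumr.
have E2 : forall k : 'I_n.+2, n.+1%:R * (Ff lam x k * Ff lam y (n.+1 - k)%N) =
   k%:R * Ff lam x k * Ff lam y (n.+1 - k)%N + Ff lam x k * ((n.+1 - k)%N%:R * Ff lam y (n.+1 - k)%N).
  move=> k; have hk : (k <= n.+1)%N by rewrite -ltnS.
  have -> : n.+1%:R = k%:R + (n.+1 - k)%N%:R :> R by rewrite -natrD subnKC.
  ring.
rewrite (eq_bigr _ (fun k _ => E2 k)) big_split /=.
congr (_ + _).
  rewrite [in RHS]big_ord_recl /= mul0r mul0r add0r; apply: eq_bigr => i _.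
  by rewrite /bump /= add1n subSS.
rewrite [in RHS]big_ord_recr /= subnn mul0r mulr0 addr0; apply: eq_bigr => i _ /=.
by rewrite subSn // -ltnS.
Qed.

Lemma conv_bin {R : realType} (w u v : nat -> R) m :
  w m / (m`!)%:R = \sum_(i < m.+1) (u i / (i`!)%:R) * (v (m - i)%N / ((m - i)%N`!)%:R) ->
  w m = \sum_(i < m.+1) ('C(m, i))%:R * u i * v (m - i)%N.
Proof.
move=> h.
have hm := fact_neq0 R m.
have -> : w m = (m`!)%:R * (w m / (m`!)%:R) by field.
rewrite h mulr_sumr; apply: eq_bigr => i _.
have hi : (i <= m)%N by rewrite -ltnS.
have h1 := fact_neq0 R i. have h2 := fact_neq0 R (m - i)%N.
rewrite -(bin_fact hi) !natrM.
field. by rewrite h1 h2.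
Qed.

Definition Bf {R : realType} (beta : nat -> R -> R) (x : R) k := beta k x / (k`!)%:R.

Lemma appellF {R : realType} (lam : R) beta (hB : is_degBernoulli lam beta) x y m :
  Bf beta (x + y) m = \sum_(i < m.+1) Bf beta x i * Ff lam y (m - i)%N.
Proof.
pose N := m.+1.
pose P (f : nat -> R) : {poly R} := \poly_(i < N) f i.
have cM : forall f g k, (k < N)%N -> (P f * P g)`_k = \sum_(i < k.+1) f i * g (k - i)%N.
  move=> f g k hk; rewrite coefM; apply: eq_bigr => i _; rewrite !coef_poly.
  have hi : (i < N)%N by apply: leq_ltn_trans hk; rewrite -ltnS.
  have hki : (k - i < N)%N by apply: leq_ltn_trans (leq_subr _ _) hk.
  by rewrite hi hki.
pose e k := Ff lam 1 k.+1.
have h1 : forall z k, (k < N)%N -> (P (Bf beta z) * P e)`_k = Ff lam z k.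
  move=> z k hk; rewrite cM //; exact: hB.
pose D := P (Bf beta x) * P (Ff lam y) - P (Bf beta (x + y)).
have hD : forall k, (k < N)%N -> (D * P e)`_k = 0.
  move=> k hk; rewrite /D mulrBl coefB h1 //.
  rewrite -mulrA [P (Ff lam y) * _]mulrC mulrA coefM.
  rewrite (eq_bigr (fun i : 'I_k.+1 => Ff lam x i * Ff lam y (k - i)%N)) ?vandF ?subrr //.
  move=> i _; rewrite h1 ?coef_poly.
    by rewrite (leq_ltn_trans (leq_subr _ _) hk).
  by apply: leq_ltn_trans hk; rewrite -ltnS.
have e0 : (P e)`_0 = 1.
  by rewrite coef_poly /= /e /Ff dfallS dfall0 /= mul0r subr0 mul1r divr1.
have Dz : forall j k, (k < j)%N -> (k < N)%N -> D`_k = 0.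
  elim=> [//|j IH] k; rewrite ltnS leq_eqVlt => /orP[/eqP -> hjN| /IH //].
  have := hD j hjN; rewrite coefM big_ord_recr /= subnn e0 mulr1 big1 ?add0r //.
  move=> i _; rewrite (IH i (ltn_ord i)) ?mul0r //; apply: ltn_trans (ltn_ord i) hjN.
have := Dz m.+1 m (ltnSn m) (ltnSn m).
rewrite /D coefB cM // coef_poly ltnSn => /eqP; rewrite subr_eq0 => /eqP <-.
by [].
Qed.

Lemma appellU {R : realType} (lam : R) beta (hB : is_degBernoulli lam beta) x y m :
  beta m (x + y) = \sum_(i < m.+1) ('C(m, i))%:R * beta i x * dfall y lam (m - i)%N.
Proof.
apply: (conv_bin (fun m => beta m (x + y)) (fun i => beta i x) (fun j => dfall y lam j)).
exact: (appellF _ _ hB x y m).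
Qed.

Lemma vandU {R : realType} (lam : R) x y m :
  dfall (x + y) lam m = \sum_(i < m.+1) ('C(m, i))%:R * dfall x lam i * dfall y lam (m - i)%N.
Proof.
apply: (conv_bin (fun m => dfall (x + y) lam m) (fun i => dfall x lam i) (fun j => dfall y lam j)).
exact: vandF.
Qed.

From mathcomp Require Import zify.

Lemma dfall_lam {R : realType} (mu : R) k : (1 < k)%N -> dfall mu mu k = 0.
Proof. by move=> h; have := @dfall_root _ mu _ _ h; rewrite mulr1n mul1r. Qed.

Lemma dfall_at0 {R : realType} (mu : R) k : (0 < k)%N -> dfall 0 mu k = 0.
Proof. by move=> h; have := @dfall_root _ mu _ _ h; rewrite mulr0n mul0r. Qed.

Lemma deltaB {R : realType} (lam : R) beta (hB : is_degBernoulli lam beta) x k :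
  beta k.+1 (x + 1) - beta k.+1 x = k.+1%:R * dfall x lam k.
Proof.
have h := appellF _ _ hB x 1 k.+1.
rewrite big_ord_recr /= subnn Ff0 mulr1 in h.
have h2 : \sum_(i < k.+1) Bf beta x i * Ff lam 1 (k.+1 - i)%N = Ff lam x k.
  rewrite {2}/Ff -(hB k x); apply: eq_bigr => i _; rewrite subSn //; rewrite -ltnS //.
rewrite h2 in h. move: h; rewrite /Bf /Ff factS natrM => h.
have hk := fact_neq0 R k. have hk1 : (k.+1)%:R != 0 :> R by rewrite pnatr_eq0.
have -> : beta k.+1 (x + 1) = (beta k.+1 (x + 1) / ((k.+1)%:R * k`!%:R)) * ((k.+1)%:R * k`!%:R).
  by field; rewrite hk addrC natr1 hk1.
rewrite h. field. by rewrite hk addrC natr1 hk1.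
Qed.

Lemma deltaB0 {R : realType} (lam : R) beta (hB : is_degBernoulli lam beta) x :
  beta 0 (x + 1) = beta 0 x.
Proof.
have h := appellF _ _ hB x 1 0.
by move: h; rewrite big_ord1 subnn Ff0 mulr1 /Bf /= !divr1.
Qed.

Lemma delta0 {R : realType} (lam : R) beta (hB : is_degBernoulli lam beta) k :
  beta k 1 - beta k 0 = (k == 1%N)%:R.
Proof.
have := deltaB0 _ _ hB 0; have := deltaB _ _ hB 0; rewrite add0r.
case: k => [_ ->|k]; first by rewrite subrr.
move=> -> _; case: k => [|k]; first by rewrite dfall0 mulr1.
by rewrite dfall_at0 // mulr0.
Qed.

Lemma stepA0 {R : realType} (lam : R) beta (hB : is_degBernoulli lam beta) :
  beta 0 1 = beta 0 (1 - lam).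
Proof.
have := appellU _ _ hB (1 - lam) lam 0.
by rewrite subrK big_ord1 /= dfall0 mulr1 mul1r.
Qed.

Lemma stepA {R : realType} (lam : R) beta (hB : is_degBernoulli lam beta) i :
  beta i.+1 1 = beta i.+1 (1 - lam) + i.+1%:R * lam * beta i (1 - lam).
Proof.
have := appellU _ _ hB (1 - lam) lam i.+1; rewrite subrK => ->.
rewrite big_ord_recr big_ord_recr /= big1.
  rewrite subSnn subnn binSn binn dfall0 dfallS dfall0 mulr0n mul0r subr0.
  ring.
move=> j _; rewrite dfall_lam ?mulr0 //=.
have := ltn_ord j; lia.
Qed.

Lemma sum_ext0 {R : realType} (f : nat -> R) m M : (m <= M)%N ->
  (forall i, (m <= i)%N -> (i < M)%N -> f i = 0) ->
  \sum_(i < M) f i = \sum_(i < m) f i.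
Proof.
move=> hmM hz.
rewrite -!(big_mkord xpredT f) (@big_cat_nat _ _ _ m 0 M _ _ (leq0n m) hmM) /=.
rewrite [X in _ + X]big1_seq ?addr0 // => i /andP[_].
by rewrite mem_index_iota => /andP[h1 h2]; apply: hz.
Qed.

Definition wc {R : realType} (lam : R) k i : R :=
  (i == k)%:R - 'C(k, i)%:R * dfall (-1) lam (k - i)%N.

Lemma wc_ge {R : realType} (lam : R) k i : (k <= i)%N -> wc lam k i = 0.
Proof.
rewrite /wc leq_eqVlt => /orP[/eqP -> | h].
  by rewrite eqxx binn subnn dfall0 mulr1 subrr.
by rewrite bin_small // gtn_eqF // mul0r subrr.
Qed.

Lemma inner {R : realType} (lam : R) beta (hB : is_degBernoulli lam beta) k M :
  (k < M)%N -> \sum_(i < M) wc lam k i * beta i 1 = (k == 1%N)%:R.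
Proof.
move=> hk.
rewrite (@sum_ext0 _ (fun i => wc lam k i * beta i 1) k.+1 M hk); last first.
  by move=> i hi _; rewrite wc_ge ?mul0r // ltnW.
rewrite -(delta0 _ _ hB k) /wc.
under eq_bigr do rewrite mulrBl.
rewrite sumrB; congr (_ - _).
  rewrite big_ord_recr /= eqxx mul1r big1 ?add0r // => i _.
  by rewrite ltn_eqF // mul0r.
rewrite -[X in beta k X](subrr 1) (appellU _ _ hB 1 (-1) k); apply: eq_bigr => i _; ring.
Qed.

Lemma indep {R : realType} (lam : R) (hl : lam != 0) N (c : nat -> R) :
  (forall x, \sum_(j < N) c j * dfall x lam j = 0) -> forall j, (j < N)%N -> c j = 0.
Proof.
move=> h.
suff: forall J j, (j < J)%N -> (j < N)%N -> c j = 0.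
  by move=> H j hj; apply: (H j.+1).
elim=> [//|J IH] j; rewrite ltnS leq_eqVlt => /orP[/eqP -> hJN| /IH //].
have dnz : dfall (J%:R * lam) lam J != 0.
  rewrite /dfall; apply/prodf_neq0 => i _.
  rewrite -mulrBl mulf_neq0 // subr_eq0 eqr_nat eq_sym ltn_eqF //.
have := h (J%:R * lam); rewrite (bigD1 (Ordinal hJN)) //= big1 ?addr0.
  by move=> /eqP; rewrite mulf_eq0 (negbTE dnz) orbF => /eqP.
move=> i hi.
case: (ltngtP i J) => hiJ.
- by rewrite (IH i hiJ) ?mul0r.
- by rewrite dfall_root ?mulr0.
- by exfalso; move: hi; rewrite -val_eqE /= hiJ eqxx.
Qed.

Definition shd {R : realType} (u : nat -> R) (j : nat) : R := if j is j'.+1 then u j' else 0.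

Lemma shift_sum {R : realType} (u g : nat -> R) M : u M = 0 ->
  \sum_(i < M.+1) u i * g i.+1 = \sum_(j < M.+1) shd u j * g j.
Proof.
move=> h; rewrite big_ord_recr /= h mul0r addr0 [in RHS]big_ord_recl /= mul0r add0r.
by apply: eq_bigr => i _; rewrite /bump /= add1n.
Qed.

Lemma ffall_diff {R : realType} (x : R) m :
  (m.+1)%:R * ffall x m.+1 = x * (ffall x m.+1 - ffall (x - 1) m.+1).
Proof.
have h1 : forall z : R, ffall z m.+1 = z * ffall (z - 1) m.
  move=> z; rewrite /ffall /dfall big_ord_recl /= mulr0n mul0r subr0; congr (_ * _).
  by apply: eq_bigr => i _; rewrite /bump /= add1n -natr1; ring.
rewrite h1 /ffall dfallS -natr1; ring.
Qed.

Theorem theorem10 (R : realType) (lam : R) (beta : nat -> R -> R) (S : nat -> nat -> R)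
  (n : nat) :
  lam != 0 -> (0 < n)%N ->
  is_degBernoulli lam beta -> is_degStirling1 lam S ->
  lam ^+ n.-1 / n%:R * dfall 1 lam^-1 n
  = \sum_(1 <= k < n.+1) beta k.-1 (1 - lam) * S n k.
Proof.
move=> hl hn hB hS.
pose a k := if k is k'.+1 then beta k' (1 - lam) else 0.
pose u i := \sum_(k < n.+1) S n k * wc lam k i.
pose c j := shd u j + j%:R * lam * u j.
have un : u n = 0 by rewrite /u big1 // => k _; rewrite wc_ge ?mulr0 // -ltnS.
have wd : forall x k, (k < n.+1)%N ->
    dfall x lam k - dfall (x - 1) lam k = \sum_(i < n.+1) wc lam k i * dfall x lam i.
  move=> x k hk; rewrite /wc.
  under eq_bigr do rewrite mulrBl.
  rewrite sumrB; congr (_ - _).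
    rewrite (bigD1 (Ordinal hk)) //= eqxx mul1r big1 ?addr0 // => i hi.
    suff -> : (i == k :> nat) = false by rewrite mul0r.
    by apply/negbTE; move: hi; apply: contra => /eqP h; apply/eqP/val_inj.
  rewrite (@sum_ext0 _ (fun i => 'C(k, i)%:R * dfall (-1) lam (k - i)%N * dfall x lam i) k.+1 n.+1 hk).
    by rewrite (vandU lam x (-1) k); apply: eq_bigr => i _; ring.
  by move=> i hi _; rewrite bin_small ?mul0r.
have Aid : forall x, n%:R * ffall x n = \sum_(j < n.+1) c j * dfall x lam j.
  move=> x.
  have e1 : n%:R * ffall x n = x * (ffall x n - ffall (x - 1) n).
    by rewrite -(prednK hn) ffall_diff.
  rewrite e1 !hS -sumrB mulr_sumr.
  under eq_bigr => k _ do rewrite -mulrBr (wd x k (ltn_ord k)).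
  transitivity (\sum_(i < n.+1) u i * (dfall x lam i.+1 + i%:R * lam * dfall x lam i)).
    rewrite /u.
    under [RHS]eq_bigr do rewrite mulr_suml.
    rewrite [RHS]exchange_big /=; apply: eq_bigr => k _.
    rewrite mulr_sumr mulr_sumr; apply: eq_bigr => i _.
    rewrite dfallS; ring.
  under eq_bigr do rewrite mulrDr.
  rewrite big_split /= shift_sum // -big_split /=; apply: eq_bigr => j _.
  rewrite /c; ring.
have cid : forall j, (j < n.+1)%N -> c j = n%:R * S n j.
  move=> j hj; apply/eqP; rewrite -subr_eq0; apply/eqP.
  apply: (@indep _ lam hl n.+1 (fun j => c j - n%:R * S n j)) hj => x.
  under eq_bigr do rewrite mulrBl.
  rewrite sumrB -Aid hS mulr_sumr.
  under [X in _ - X]eq_bigr do rewrite -mulrA.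
  by rewrite subrr.
have Cid : \sum_(j < n.+1) c j * a j = S n 1.
  transitivity (\sum_(i < n.+1) u i * (a i.+1 + i%:R * lam * a i)).
    rewrite /c; under eq_bigr do rewrite mulrDl.
    rewrite big_split /= -shift_sum // -big_split /=; apply: eq_bigr => i _; ring.
  transitivity (\sum_(i < n.+1) u i * beta i 1).
    apply: eq_bigr => i _; congr (_ * _); case: i => [[|i] hi] /=.
      by rewrite mulr0 addr0 (stepA0 _ _ hB).
    by rewrite (stepA _ _ hB).
  rewrite /u; under eq_bigr do rewrite mulr_suml.
  rewrite exchange_big /=.
  transitivity (\sum_(k < n.+1) S n k * ((nat_of_ord k) == 1%N)%:R).
    apply: eq_bigr => k _; rewrite -(inner _ _ hB _ _ (ltn_ord k)) mulr_sumr.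
    by apply: eq_bigr => i _; ring.
  have h1 : (1 < n.+1)%N by [].
  rewrite (bigD1 (Ordinal h1)) //= mulr1 big1 ?addr0 // => i hi.
  suff -> : (i == 1%N :> nat) = false by rewrite mulr0.
  by apply/negbTE; move: hi; apply: contra => /eqP h; apply/eqP/val_inj.
have hn0 : n%:R != 0 :> R by rewrite pnatr_eq0 -lt0n.
have RHS : \sum_(1 <= k < n.+1) beta k.-1 (1 - lam) * S n k = S n 1 / n%:R.
  have -> : \sum_(1 <= k < n.+1) beta k.-1 (1 - lam) * S n k
      = \sum_(k < n.+1) a k * S n k.
    rewrite big_add1 /= big_mkord [RHS]big_ord_recl /= mul0r add0r.
    by apply: eq_bigr => i _; rewrite /bump /= add1n.
  rewrite -Cid.
  under [in RHS]eq_bigr => j _ do rewrite (cid j (ltn_ord j)).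
  under [in RHS]eq_bigr do rewrite -mulrA mulrC. rewrite -mulr_suml. under eq_bigr do rewrite mulrC. field; by rewrite hn0.
rewrite RHS.
have S0 : S n 0 = 0.
  have := hS n 0; rewrite /ffall dfall_at0 // big_ord_recl dfall0 mulr1 big1 ?addr0 //.
  by move=> i _; rewrite dfall_at0 ?mulr0.
have S1 : ffall lam n = S n 1 * lam.
  have h1 : (1 < n.+1)%N by [].
  rewrite hS (bigD1 (Ordinal h1)) //= big1 ?addr0.
    by rewrite dfallS dfall0 mul0r subr0 mul1r.
  move=> [[|[|i]] hi] //= _; first by rewrite S0 mul0r.
  by rewrite dfall_lam ?mulr0.
have hF : ffall lam n = lam ^+ n * dfall 1 lam^-1 n.
  have -> : lam ^+ n = \prod_(i < n) lam by rewrite prodr_const card_ord.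
  rewrite /ffall /dfall -big_split /=; apply: eq_bigr => i _; field.
  by rewrite hl.
have -> : S n 1 = ffall lam n / lam by rewrite S1; field.
rewrite hF -(prednK hn) exprS; field.
by rewrite hl addrC natr1 prednK // hn0.
Qed.
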